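(* Consider the lattice Boltzmann scheme and initialisation $w$ described in the context, and let $H\in\mathbb{N}^*$. Assume that (i) the Fourier symbol of $w_1$ satisfies $\hat w_1(\xi\Delta x)=1+O(|\xi\Delta x|^{H+1})$ as $|\xi\Delta x|\to0$ (equivalently $\omega_1^{(0)}=1$ and $\omega_1^{(h)}=0$ for $h\in\{1,\dots,H\}$); and (ii) for every $n\in\{1,\dots,Q\}$ the modified equation of the $n$-th starting scheme matches that of the bulk finite difference scheme up to order $H$, i.e. $\log\hat g_{[n]}(\xi\Delta x)-n\log\hat g_1(\xi\Delta x)=O(|\xi\Delta x|^{H+1})$. Then for every $n>Q$ the modified equation of the $n$-th starting scheme also matches that of the bulk finite difference scheme up to order $H$, i.e. $\hat g_{[n]}(\xi\Delta x)=\hat g_1(\xi\Delta x)^n+O(|\xi\Delta x|^{H+1})$.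
   Context: Fix $d\ge1$, $q\ge1$, velocities $c_1,\dots,c_q\in\mathbb{Z}^d$, invertible $M$, $S=\mathrm{diag}(s_1,\dots,s_q)$ with $s_i\in(0,2]$ for $i\ge2$, $\epsilon\in\mathbb{R}^q$, $\epsilon_1=1$; $K=I-S(I-\epsilon e_1^T)$; acoustic scaling $\Delta t=\Delta x/\lambda$. Shifts $(x_\ell\phi)(x)=\phi(x-\Delta xe_\ell)$; $T=M\mathrm{diag}(x^{c_1},\dots,x^{c_q})M^{-1}$, $E=TK$. $Q$ is the number of $i\in\{2,\dots,q\}$ with $s_i\ne1$. The initialisation is $m(0,x)=w\,m_1^\circ(x)$ with $w$ a vector of Laurent polynomials in the shifts, $w_1$ having asymptotic expansion $\omega_1^{(0)}+\sum_{h\ge1}\Delta x^h\omega_1^{(h)}$ on smooth functions. Fourier symbols: for a Laurent polynomial operator $\mathsf{d}$ in the shifts, $\hat{\mathsf d}(\xi\Delta x)$ is obtained by substituting $x_\ell\mapsto e^{-i\xi_\ell\Delta x}$, $\xi\in\mathbb{R}^d$. The bulk finite difference scheme $z^{Q+1-q}\det(zI-E)m_1=0$ has amplification polynomial $\hat\Phi(z,\xi\Delta x)=z^{Q+1-q}\det(zI-\hat E(\xi\Delta x))$; $\hat g_1(\xi\Delta x)$ denotes its root with $\hat g_1(\xi\Delta x)=1+O(|\xi\Delta x|)$ as $|\xi\Delta x|\to0$ (the consistency root), and the modified equation of the bulk scheme is $\partial_t=\frac{\lambda}{\Delta x}\log\hat g_1(\xi\Delta x)$. For $n\in\mathbb{N}^*$,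 $\hat g_{[n]}(\xi\Delta x)=(\hat E(\xi\Delta x)^n\hat w(\xi\Delta x))_1$ is the symbol of the $n$-th starting scheme $m_1(n\Delta t,\cdot)=(E^nw)_1m_1^\circ$, whose modified equation is $\partial_t=\frac{\lambda}{n\Delta x}\log\hat g_{[n]}(\xi\Delta x)$ as $|\xi\Delta x|\to0$. *)

(* Defs.v *)
From HB Require Import structures.
From mathcomp Require Import all_boot all_order all_algebra.
From mathcomp Require Import all_classical all_reals all_analysis.
From mathcomp Require Import complex.
Set Implicit Arguments. Unset Strict Implicit. Unset Printing Implicit Defensive.
Import Order.TTheory GRing.Theory Num.Theory.
Local Open Scope ring_scope.
Local Open Scope complex_scope.

Section LBM.
Variable R : realType.
Local Notation C := R[i].

(* Euclidean norm of a (dimensionless) wave-number theta = xi * Dx in R^d. *)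
Definition vnorm (d : nat) (th : 'I_d -> R) : R :=
  Num.sqrt (\sum_(l < d) th l ^+ 2).

Definition dotZ (d : nat) (th : 'I_d -> R) (k : 'I_d -> int) : R :=
  \sum_(l < d) th l * (k l)%:~R.

Definition expi (a : R) : C := cos a +i* sin a.

(* Fourier symbol of the shift monomial x^k = prod_l x_l^{k_l}, with
   x_l |-> e^{-i theta_l}: the symbol is e^{-i theta . k}. *)
Definition monomial_symbol (d : nat) (k : 'I_d -> int) (th : 'I_d -> R) : C :=
  expi (- dotZ th k).

(* A Laurent polynomial in the shifts with real coefficients, represented as a
   finite list of (coefficient, exponent) pairs: sum a * x^k. *)
Definition laurent (d : nat) := seq (R * ('I_d -> int)).

Definition laurent_symbol (d : nat) (p : laurent d) (th : 'I_d -> R) : C :=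
  \sum_(m <- p) (m.1)%:C * monomial_symbol m.2 th.

(* Principal complex logarithm Log z = ln |z| + i Arg z, Arg z in (-pi, pi]. *)
Definition Arg (z : C) : R :=
  let x := complex.Re z in let y := complex.Im z in
  if 0 < x then atan (y / x)
  else if x < 0 then (if 0 <= y then atan (y / x) + pi else atan (y / x) - pi)
  else if 0 < y then pi / 2 else if y < 0 then - (pi / 2) else 0.

Definition Logc (z : C) : C := ln (Normc.normc z) +i* Arg z.

Definition idx1 (q : nat) (hq : (0 < q)%N) : 'I_q := Ordinal hq.

Definition e1 (q : nat) (hq : (0 < q)%N) : 'cV[R]_q := delta_mx (idx1 hq) 0.

Definition Kmat (q : nat) (hq : (0 < q)%N) (s : 'I_q -> R) (eps : 'cV[R]_q)
  : 'M[R]_q :=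
  1%:M - diag_mx (\row_i s i) *m (1%:M - eps *m (e1 hq)^T).

Definition Qnum (q : nat) (hq : (0 < q)%N) (s : 'I_q -> R) : nat :=
  #|[set i : 'I_q | (i != idx1 hq) && (s i != 1)]|.

Definition realC (q : nat) (A : 'M[R]_q) : 'M[C]_q := map_mx (fun x => x%:C) A.

Definition That (d q : nat) (c : 'I_q -> 'I_d -> int) (M : 'M[R]_q)
  (th : 'I_d -> R) : 'M[C]_q :=
  realC M *m diag_mx (\row_j monomial_symbol (c j) th) *m realC (invmx M).

Definition Ehat (d q : nat) (hq : (0 < q)%N) (c : 'I_q -> 'I_d -> int)
  (M : 'M[R]_q) (s : 'I_q -> R) (eps : 'cV[R]_q) (th : 'I_d -> R) : 'M[C]_q :=
  That c M th *m realC (Kmat hq s eps).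

Definition Phihat (d q : nat) (hq : (0 < q)%N) (c : 'I_q -> 'I_d -> int)
  (M : 'M[R]_q) (s : 'I_q -> R) (eps : 'cV[R]_q) (z : C) (th : 'I_d -> R) : C :=
  z ^ ((Qnum hq s)%:Z + 1 - q%:Z) * \det (z%:M - Ehat hq c M s eps th).

Definition what (d q : nat) (w : 'I_q -> laurent d) (th : 'I_d -> R) : 'cV[C]_q :=
  \col_j laurent_symbol (w j) th.

Definition gstart (d q : nat) (hq : (0 < q)%N) (c : 'I_q -> 'I_d -> int)
  (M : 'M[R]_q) (s : 'I_q -> R) (eps : 'cV[R]_q) (w : 'I_q -> laurent d)
  (n : nat) (th : 'I_d -> R) : C :=
  ((Ehat hq c M s eps th ^+ n) *m what w th) (idx1 hq) 0.

Definition OAt0 (d : nat) (f : ('I_d -> R) -> C) (p : nat) : Prop :=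
  exists K : R, exists delta : R, 0 < delta /\
    forall th : 'I_d -> R, vnorm th < delta -> Normc.normc (f th) <= K * vnorm th ^+ p.

End LBM.
Arguments OAt0 [R d] f%_ring_scope p%_nat_scope.

(* Main.v *)
Require Import Defs.
From HB Require Import structures.
From mathcomp Require Import all_boot all_order all_algebra.
From mathcomp Require Import all_classical all_reals all_analysis.
From mathcomp Require Import complex.
From mathcomp Require Import lra ring.
Import Order.TTheory GRing.Theory Num.Theory.
Import numFieldNormedType.Exports.
Local Open Scope ring_scope.
Local Open Scope complex_scope.
Set Implicit Arguments. Unset Strict Implicit.

Section Norms.
Variable R : realType.
Local Notation C := R[i].
Local Notation nc := (@Normc.normc R).

Lemma nc_ge0 (z : C) : 0 <= nc z.
Proof. by case: z => a b; rewrite /Normc.normc sqrtr_ge0. Qed.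

Lemma ncD (x y : C) : nc (x + y) <= nc x + nc y.
Proof. exact: (@le_normcD R x y). Qed.

Lemma ncM (x y : C) : nc (x * y) = nc x * nc y.
Proof. exact: Normc.normcM. Qed.

Lemma ncN (x : C) : nc (- x) = nc x.
Proof. exact: (@normcN R x). Qed.

Lemma ncB (x y : C) : nc (x - y) <= nc x + nc y.
Proof. by rewrite -(ncN y); apply: ncD. Qed.

Lemma ncR (a : R) : nc a%:C = `|a|.
Proof. by rewrite /Normc.normc /= expr0n /= addr0 sqrtr_sqr. Qed.

Lemma sqrt_le_abs (x y : R) : 0 <= y -> x <= y ^+ 2 -> Num.sqrt x <= y.
Proof.
move=> y0 xy; have -> : y = Num.sqrt (y ^+ 2) by rewrite sqrtr_sqr ger0_norm.
by rewrite ler_wsqrtr.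
Qed.

Lemma abs_le_sqrt (x y : R) : x ^+ 2 <= y -> `|x| <= Num.sqrt y.
Proof. by move=> h; rewrite -sqrtr_sqr ler_wsqrtr. Qed.

Lemma nc_cplx (a b : R) : nc (a +i* b) <= `|a| + `|b|.
Proof.
rewrite /Normc.normc; apply: sqrt_le_abs; first by rewrite addr_ge0.
have h1 := normr_ge0 a. have h2 := normr_ge0 b.
rewrite -(real_normK (num_real a)) -(real_normK (num_real b)). nra.
Qed.

Lemma nc_Re (z : C) : `|complex.Re z| <= nc z.
Proof.
case: z => a b /=; rewrite /Normc.normc; apply: abs_le_sqrt.
by rewrite lerDl sqr_ge0.
Qed.

Lemma nc_Im (z : C) : `|complex.Im z| <= nc z.
Proof.
case: z => a b /=; rewrite /Normc.normc; apply: abs_le_sqrt.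
by rewrite lerDr sqr_ge0.
Qed.

Lemma ncX (z : C) n : nc (z ^+ n) = nc z ^+ n.
Proof.
elim: n => [|n IH]; first by rewrite !expr0 Normc.normc1.
by rewrite !exprS ncM IH.
Qed.

Lemma nc_sum (I : Type) (s : seq I) (P : pred I) (F : I -> C) :
  nc (\sum_(i <- s | P i) F i) <= \sum_(i <- s | P i) nc (F i).
Proof.
elim: s => [|a s IH]; first by rewrite !big_nil Normc.normc0.
rewrite !big_cons; case: (P a) => //.
by apply: le_trans (ncD _ _) _; rewrite lerD2l.
Qed.

End Norms.

Section Trig.
Variable R : realType.
Lemma lip1 (f df : R -> R) : (forall x : R, is_derive x (1:R) f (df x)) ->
  continuous f -> (forall x, `|df x| <= 1) -> forall x, `|f x - f 0| <= `|x|.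
Proof.
move=> hd hc hb x.
case: (leP 0 x) => hx.
  have [c _ ->] := MVT_segment hx (fun y _ => hd y) (continuous_subspaceT hc).
  by rewrite subr0 normrM ler_piMl.
have [c _ e] := MVT_segment (ltW hx) (fun y _ => hd y) (continuous_subspaceT hc).
rewrite distrC e sub0r normrM normrN ler_piMl //.
Qed.
Lemma sin_le x : `|sin x| <= `|x| :> R.
Proof.
have := @lip1 sin cos (fun y => is_derive_sin y) (@continuous_sin R) (@cos_max R) x.
by rewrite sin0 subr0.
Qed.
Lemma cos_le x : `|cos x - 1| <= `|x| :> R.
Proof.
have := @lip1 cos (fun y => - sin y) (fun y => is_derive_cos y) (@continuous_cos R) _ x.
rewrite cos0; apply => y; rewrite normrN; exact: sin_max.
Qed.
End Trig.

Section OCalc.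
Variables (R : realType) (d : nat).
Local Notation C := R[i].
Local Notation nc := (@Normc.normc R).
Local Notation vn := (@vnorm R d).
Local Notation th0 := (fun _ : 'I_d => (0 : R)).
Implicit Types (f g : ('I_d -> R) -> C).

Lemma vn_ge0 th : 0 <= vn th.
Proof. exact: sqrtr_ge0. Qed.

Lemma vn0 : vn th0 = 0.
Proof. by rewrite /vnorm big1 ?sqrtr0 // => l _; rewrite expr0n. Qed.

Lemma coord_le th l : `|th l| <= vn th.
Proof.
rewrite /vnorm; apply: abs_le_sqrt.
rewrite (bigD1 l) //= lerDl; apply: sumr_ge0 => i _; exact: sqr_ge0.
Qed.

Lemma O_near f g p delta0 : OAt0 f p -> 0 < delta0 ->
  (forall th, vn th < delta0 -> g th = f th) -> OAt0 g p.
Proof.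
move=> [K [delta [dp H]]] d0 e; exists K, (Num.min delta delta0); split.
  by rewrite lt_min dp d0.
by move=> th; rewrite lt_min => /andP[h1 h2]; rewrite e // H.
Qed.

Lemma O_ext f g p : OAt0 f p -> (forall th, g th = f th) -> OAt0 g p.
Proof. by move=> h e; apply: (O_near h (ltr01 : (0:R) < 1)) => th _; apply: e. Qed.

Lemma O_Kpos f p : OAt0 f p -> exists K delta, [/\ 0 <= K, 0 < delta &
  forall th, vn th < delta -> nc (f th) <= K * vn th ^+ p].
Proof.
move=> [K [delta [dp H]]]; exists `|K|, delta; split => // th hth.
apply: le_trans (H _ hth) _; apply: ler_wpM2r; first by rewrite exprn_ge0 ?vn_ge0.
exact: ler_norm.
Qed.

Lemma O_weak f p r : (p <= r)%N -> OAt0 f r -> OAt0 f p.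
Proof.
move=> pr /O_Kpos [K [delta [K0 dp H]]]; exists K, (Num.min delta 1); split.
  by rewrite lt_min dp ltr01.
move=> th; rewrite lt_min => /andP[h1 h2]; apply: le_trans (H _ h1) _.
apply: ler_wpM2l => //; apply: ler_wiXn2l => //; [exact: vn_ge0|exact: ltW].
Qed.

Lemma O_add f g p : OAt0 f p -> OAt0 g p -> OAt0 (fun th => f th + g th) p.
Proof.
move=> [K1 [d1 [d1p H1]]] [K2 [d2 [d2p H2]]]; exists (K1 + K2), (Num.min d1 d2); split.
  by rewrite lt_min d1p d2p.
move=> th; rewrite lt_min => /andP[h1 h2]; apply: le_trans (ncD _ _) _.
by rewrite mulrDl lerD ?H1 ?H2.
Qed.

Lemma O_opp f p : OAt0 f p -> OAt0 (fun th => - f th) p.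
Proof. by move=> [K [de [dp H]]]; exists K, de; split => // th h; rewrite ncN H. Qed.

Lemma O_sub f g p : OAt0 f p -> OAt0 g p -> OAt0 (fun th => f th - g th) p.
Proof. by move=> hf hg; apply: O_add hf (O_opp hg). Qed.

Lemma O_mul f g p r : OAt0 f p -> OAt0 g r -> OAt0 (fun th => f th * g th) (p + r).
Proof.
move=> [K1 [d1 [d1p H1]]] [K2 [d2 [d2p H2]]]; exists (K1 * K2), (Num.min d1 d2); split.
  by rewrite lt_min d1p d2p.
move=> th; rewrite lt_min => /andP[h1 h2]; rewrite ncM exprD mulrACA.
by apply: ler_pM; rewrite ?nc_ge0 ?H1 ?H2.
Qed.

Lemma O_cst (c : C) : OAt0 (fun _ : 'I_d -> R => c) 0.
Proof. by exists (nc c), 1; split => // th _; rewrite expr0 mulr1. Qed.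

Lemma O_zero p : OAt0 (fun _ : 'I_d -> R => 0) p.
Proof.
by exists 0, 1; split => // th _; rewrite mul0r Normc.normc0.
Qed.

Lemma O_sum (I : Type) (s : seq I) (P : pred I) (F : I -> ('I_d -> R) -> C) p :
  (forall i, P i -> OAt0 (F i) p) ->
  OAt0 (fun th => \sum_(i <- s | P i) F i th) p.
Proof.
move=> h; elim: s => [|a s IH].
  by apply: O_ext (O_zero p) _ => th; rewrite big_nil.
case Pa: (P a).
  by apply: O_ext (O_add (h a Pa) IH) _ => th; rewrite big_cons Pa.
by apply: O_ext IH _ => th; rewrite big_cons Pa.
Qed.

Lemma O_prod0 (I : Type) (s : seq I) (P : pred I) (F : I -> ('I_d -> R) -> C) :
  (forall i, P i -> OAt0 (F i) 0) ->
  OAt0 (fun th => \prod_(i <- s | P i) F i th) 0.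
Proof.
move=> h; elim: s => [|a s IH].
  by apply: O_ext (O_cst 1) _ => th; rewrite big_nil.
case Pa: (P a).
  by apply: O_ext (O_mul (h a Pa) IH) _ => th; rewrite big_cons Pa.
by apply: O_ext IH _ => th; rewrite big_cons Pa.
Qed.

Definition Lip f := OAt0 (fun th => f th - f th0) 1.

Lemma Lip_Bd f : Lip f -> OAt0 f 0.
Proof.
move=> h; apply: O_ext (O_add (O_weak (isT : (0 <= 1)%N) h) (O_cst (f th0))) _.
by move=> th; rewrite subrK.
Qed.

Lemma Lip_cst (c : C) : Lip (fun _ : 'I_d -> R => c).
Proof. by apply: O_ext (O_zero 1) _ => th; rewrite subrr. Qed.

Lemma Lip_add f g : Lip f -> Lip g -> Lip (fun th => f th + g th).
Proof.
move=> hf hg; apply: O_ext (O_add hf hg) _ => th.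
by rewrite opprD addrACA.
Qed.

Lemma Lip_mul f g : Lip f -> Lip g -> Lip (fun th => f th * g th).
Proof.
move=> hf hg.
have h1 := O_mul hf (Lip_Bd hg).
have h2 := O_mul (O_cst (f th0)) hg.
apply: O_ext (O_add h1 h2) _ => th /=.
by rewrite mulrBl mulrBr addrA subrK.
Qed.

Lemma Lip_sum (I : Type) (s : seq I) (P : pred I) (F : I -> ('I_d -> R) -> C) :
  (forall i, P i -> Lip (F i)) -> Lip (fun th => \sum_(i <- s | P i) F i th).
Proof.
move=> h; elim: s => [|a s IH].
  by apply: O_ext (Lip_cst 0) _ => th; rewrite !big_nil.
case Pa: (P a).
  by apply: O_ext (Lip_add (h a Pa) IH) _ => th; rewrite !big_cons Pa.
by apply: O_ext IH _ => th; rewrite !big_cons Pa.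
Qed.


Lemma dotZ_le th (k : 'I_d -> int) :
  `|dotZ th k| <= (\sum_l `|(k l)%:~R : R|) * vn th.
Proof.
rewrite /dotZ mulr_suml; apply: le_trans (ler_norm_sum _ _ _) _.
apply: ler_sum => l _; rewrite normrM mulrC ler_wpM2l //; exact: coord_le.
Qed.

Lemma expi_sub1 (a : R) : nc (expi a - 1) <= 2 * `|a|.
Proof.
have -> : expi a - 1 = (cos a - 1) +i* (sin a) by rewrite /expi; simpc.
apply: le_trans (nc_cplx _ _) _; rewrite mulr2n mulrDl mul1r.
by apply: lerD; [exact: cos_le|exact: sin_le].
Qed.

Lemma Lip_mono (k : 'I_d -> int) : Lip (monomial_symbol k).
Proof.
exists (2 * \sum_l `|(k l)%:~R : R|), 1; split => // th _.
rewrite /monomial_symbol.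
have -> : dotZ th0 k = 0 by rewrite /dotZ big1 // => l _; rewrite mul0r.
rewrite oppr0.
have -> : expi (0:R) = 1 by rewrite /expi cos0 sin0.
rewrite expr1; apply: le_trans (expi_sub1 _) _; rewrite normrN -mulrA ler_wpM2l //.
exact: dotZ_le.
Qed.

Lemma Lip_laurent (p : laurent R d) : Lip (laurent_symbol p).
Proof.
rewrite /Lip /laurent_symbol; apply: (@Lip_sum _ _ _ (fun m th => (m.1)%:C * monomial_symbol m.2 th)).
by move=> m _; apply: Lip_mul; [exact: Lip_cst|exact: Lip_mono].
Qed.

End OCalc.


Section Mat.
Variables (R : realType) (d : nat).
Local Notation C := R[i].
Local Notation nc := (@Normc.normc R).
Local Notation vn := (@vnorm R d).
Local Notation th0 := (fun _ : 'I_d => (0 : R)).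

Lemma Lip_ext (f g : ('I_d -> R) -> C) : Lip f -> (forall th, g th = f th) -> Lip g.
Proof. by move=> h e; apply: O_ext h _ => th; rewrite !e. Qed.

Definition LipM m n (F : ('I_d -> R) -> 'M[C]_(m, n)) :=
  forall i j, Lip (fun th => F th i j).

Lemma LipM_cst m n (A : 'M[C]_(m, n)) : LipM (fun _ => A).
Proof. by move=> i j; exact: Lip_cst. Qed.

Lemma LipM_mul m n p (F : _ -> 'M[C]_(m, n)) (G : _ -> 'M[C]_(n, p)) :
  LipM F -> LipM G -> LipM (fun th => F th *m G th).
Proof.
move=> hF hG i j; apply: O_ext (@Lip_sum _ _ _ (index_enum 'I_n) xpredT
   (fun k th => F th i k * G th k j) _) _.
  by move=> k _; apply: Lip_mul.
by move=> th; rewrite !mxE.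
Qed.

Lemma LipM_exp q (F : _ -> 'M[C]_q) n : LipM F -> LipM (fun th => F th ^+ n).
Proof.
move=> hF; elim: n => [|n IH].
  by move=> i j; apply: O_ext (LipM_cst (1%:M : 'M[C]_q) i j) _ => th; rewrite expr0.
move=> i j; apply: O_ext (LipM_mul hF IH i j) _ => th.
by rewrite !exprS.
Qed.

Lemma LipM_diag q (f : 'I_q -> ('I_d -> R) -> C) : (forall j, Lip (f j)) ->
  LipM (fun th => diag_mx (\row_j f j th)).
Proof.
move=> hf i j; case: (eqVneq i j) => [<-|ne].
  by eapply Lip_ext; [exact: (hf i)|] => th; rewrite !mxE eqxx mulr1n.
by eapply Lip_ext; [exact: (Lip_cst _ 0)|] => th; rewrite !mxE (negbTE ne) mulr0n.
Qed.


Lemma mono0 (k : 'I_d -> int) : monomial_symbol k th0 = 1.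
Proof.
rewrite /monomial_symbol.
have -> : dotZ th0 k = 0 by rewrite /dotZ big1 // => l _; rewrite mul0r.
by rewrite oppr0 /expi cos0 sin0.
Qed.

Variables (q : nat) (hq : (0 < q)%N) (c : 'I_q -> 'I_d -> int) (M : 'M[R]_q)
  (s : 'I_q -> R) (eps : 'cV[R]_q) (w : 'I_q -> laurent R d).

Lemma LipM_That : LipM (That c M).
Proof.
apply: LipM_mul; last exact: LipM_cst.
apply: LipM_mul; first exact: LipM_cst.
by apply: LipM_diag => j; apply: Lip_mono.
Qed.

Lemma LipM_Ehat : LipM (Ehat hq c M s eps).
Proof. by apply: LipM_mul; [exact: LipM_That|exact: LipM_cst]. Qed.

Lemma LipM_what : LipM (what w).
Proof.
move=> i j; eapply Lip_ext; first exact: (Lip_laurent (w i)).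
by move=> th; rewrite mxE.
Qed.

Lemma Lip_gstart n : Lip (gstart hq c M s eps w n).
Proof.
by eapply Lip_ext; first exact: (LipM_mul (LipM_exp n LipM_Ehat) LipM_what (idx1 hq) 0).
Qed.

Lemma Kmat_E i j : Kmat hq s eps i j =
  (i == j)%:R - s i * ((i == j)%:R - eps i 0 * (j == idx1 hq)%:R).
Proof.
by rewrite /Kmat mul_diag_mx !mxE big_ord1 /e1 !mxE eqxx andbT.
Qed.

Lemma That0 : M \in unitmx -> That c M th0 = 1%:M.
Proof.
move=> hM; rewrite /That.
have -> : diag_mx (\row_j monomial_symbol (c j) th0) = 1%:M.
  by apply/matrixP => i j; rewrite !mxE mono0.
by rewrite mulmx1 /realC -map_mxM mulmxV // map_mx1.
Qed.


Lemma Krow1 : eps (idx1 hq) 0 = 1 -> forall j,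
  realC (Kmat hq s eps) (idx1 hq) j = (idx1 hq == j)%:R.
Proof.
move=> he j; rewrite mxE Kmat_E he mul1r [(j == _)]eq_sym subrr mulr0 subr0.
by rewrite rmorph_nat.
Qed.

Lemma gstart0 : M \in unitmx -> eps (idx1 hq) 0 = 1 -> forall n,
  gstart hq c M s eps w n th0 = laurent_symbol (w (idx1 hq)) th0.
Proof.
move=> hM he n; rewrite /gstart /Ehat That0 // mul1mx.
elim: n => [|n IH]; first by rewrite expr0 mul1mx mxE.
rewrite exprS -mulmxE -mulmxA [in LHS]mxE (bigD1 (idx1 hq)) //= Krow1 // eqxx mul1r IH.
by rewrite big1 ?addr0 // => j ne; rewrite Krow1 // eq_sym (negbTE ne) mul0r.
Qed.

End Mat.


Section Expc.
Variable R : realType.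
Local Notation C := R[i].
Local Notation nc := (@Normc.normc R).

Definition expc (z : C) : C := (expR (complex.Re z))%:C * expi (complex.Im z).

Lemma expiD (a b : R) : expi (a + b) = expi a * expi b.
Proof. by rewrite /expi cosD sinD; simpc; rewrite [X in _ +i* X]addrC. Qed.

Lemma expcD (x y : C) : expc (x + y) = expc x * expc y.
Proof.
case: x => a b; case: y => a' b'; rewrite /expc /= expRD expiD rmorphM /=.
by rewrite mulrACA.
Qed.

Lemma expc0 : expc 0 = 1.
Proof. by rewrite /expc /= expR0 /expi cos0 sin0 mul1r. Qed.

Lemma expc_nat n (z : C) : expc (n%:R * z) = expc z ^+ n.
Proof.
elim: n => [|n IH]; first by rewrite mul0r expc0 expr0.
by rewrite -addn1 natrD mulrDl mul1r expcD IH exprD expr1.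
Qed.

Lemma expc_Logc (z : C) : 0 < complex.Re z -> expc (Logc z) = z.
Proof.
case: z => x y /= hx.
rewrite /expc /Logc /Arg /= hx /=.
set u := y / x.
have hn : Num.sqrt (x ^+ 2 + y ^+ 2) = x * Num.sqrt (1 + u ^+ 2).
  have -> : x ^+ 2 + y ^+ 2 = x ^+ 2 * (1 + u ^+ 2).
    by rewrite /u mulrDr mulr1 expr_div_n mulrCA divff ?mulr1 // expf_neq0 // gt_eqF.
  by rewrite sqrtrM ?sqr_ge0 // sqrtr_sqr gtr0_norm.
have hpos : 0 < Num.sqrt (x ^+ 2 + y ^+ 2) by rewrite hn mulr_gt0 // sqrtr_gt0 ltr_pwDl // sqr_ge0.
rewrite lnK ?posrE // hn.
have hc : cos (atan u) = (Num.sqrt (1 + u ^+ 2))^-1 by rewrite cos_atan.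
have hs0 : 0 < Num.sqrt (1 + u ^+ 2) by rewrite sqrtr_gt0 ltr_pwDl // sqr_ge0.
have hs : sin (atan u) = u * cos (atan u).
  by rewrite -{2}(atanK u) /tan divfK // hc invr_eq0 gt_eqF.
rewrite /expi hs hc; simpc.
apply/eqP; rewrite eq_complex /=; apply/andP; split; apply/eqP.
  by rewrite mulfK // gt_eqF.
rewrite /u; field; rewrite ?gt_eqF //.
Qed.

Lemma expR_sub1 (a : R) : `|a| <= 1 -> `|expR a - 1| <= expR 1 * `|a|.
Proof.
move=> ha.
have l1 := expR_ge1Dx a.
have l2 := expR_ge1Dx (- a).
have e1 : expR (- a) * expR a = 1 by rewrite -expRD addNr expR0.
have ea : 0 < expR a := expR_gt0 a.
have eb : expR a <= expR 1 by rewrite ler_expR; move: ha; rewrite ler_norml => /andP[].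
have u : expR a - 1 <= a * expR a.
  have : (1 - a) * expR a <= expR (- a) * expR a by rewrite ler_pM2r // addrC.
  by rewrite e1 mulrBl mul1r; lra.
rewrite ler_norml; apply/andP; split.
  have : - a <= `|a| by rewrite -normrN ler_norm.
  have : (1:R) <= expR (1:R) by have h := expR_ge1Dx (1:R); lra.
  have h0 := normr_ge0 a. move=> h4 h5. nra.
have : a <= `|a| by exact: ler_norm.
have h0 := normr_ge0 a. move=> h4. nra.
Qed.

Lemma expc_sub1 (z : C) : nc z <= 1 -> nc (expc z - 1) <= (2 * expR 1 + 1) * nc z.
Proof.
case: z => a b hz.
have ha : `|a| <= nc (a +i* b) := nc_Re (a +i* b).
have hb : `|b| <= nc (a +i* b) := nc_Im (a +i* b).
have -> : expc (a +i* b) - 1 = (expR a * cos b - 1) +i* (expR a * sin b).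
  by rewrite /expc /expi /=; simpc.
apply: le_trans (nc_cplx _ _) _.
have h1 : `|expR a - 1| <= expR 1 * `|a| by apply: expR_sub1; apply: le_trans hz.
have eb : expR a <= expR 1.
  by rewrite ler_expR; apply: le_trans (ler_norm a) (le_trans ha hz).
have h2 : `|expR a * cos b - 1| <= `|expR a - 1| + `|b|.
  have -> : expR a * cos b - 1 = (expR a - 1) * cos b + (cos b - 1) by ring.
  apply: le_trans (ler_normD _ _) _; apply: lerD; last exact: cos_le.
  by rewrite normrM; apply: ler_piMr => //; exact: cos_max.
have h3 : `|expR a * sin b| <= expR 1 * `|b|.
  rewrite normrM (gtr0_norm (expR_gt0 a)).
  apply: ler_pM; [exact: expR_ge0|exact: normr_ge0|exact: eb|exact: sin_le].
have e0 : (0:R) <= expR (1:R) := ltW (expR_gt0 1).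
have p1 : expR 1 * `|a| <= expR 1 * nc (a +i* b) := ler_wpM2l e0 ha.
have p2 : expR 1 * `|b| <= expR 1 * nc (a +i* b) := ler_wpM2l e0 hb.
rewrite mulrDl mulr2n !mulrDl mul1r. lra.
Qed.

End Expc.


Local Close Scope complex_scope.
Lemma horner_mx_sum (F : comNzRingType) n (A : 'M[F]_n.+1) (p : {poly F}) :
  horner_mx A p = \sum_(k < size p) p`_k *: A ^+ k.
Proof.
rewrite -{1}(coefK p) poly_def rmorph_sum /=; apply: eq_bigr => k _.
by rewrite linearZ /= rmorphXn /= horner_mx_X.
Qed.

Section Block.
Variables (F : fieldType) (q r : nat) (J : {set 'I_q}) (E : 'M[F]_q).
Hypothesis cardJ : #|J| = r.+1.
Hypothesis colz : forall i k, k \notin J -> E i k = 0.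
Local Notation n := r.+1.
Definition fJ (i : 'I_n) : 'I_q := enum_val (cast_ord (esym cardJ) i).

Lemma sum_J (G : 'I_q -> F) : (forall k, k \notin J -> G k = 0) ->
  \sum_k G k = \sum_(i < n) G (fJ i).
Proof.
move=> hG; rewrite (bigID (mem J)) /= [X in _ + X]big1 ?addr0.
  rewrite (big_enum_val (A := mem J)) /=.
  rewrite (reindex (cast_ord (esym cardJ))) //=.
  by exists (cast_ord cardJ) => i _; [exact: cast_ordKV|exact: cast_ordK].
by move=> k; apply: hG.
Qed.

Definition As : 'M[F]_n := \matrix_(i, j) E (fJ i) (fJ j).

Lemma pow_restrict (W : 'cV[F]_q) m i :
  (E ^+ m *m W) (fJ i) 0 = (As ^+ m *m \col_j W (fJ j) 0) i 0.
Proof.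
elim: m i => [|m IH] i; first by rewrite !expr0 !mul1mx mxE.
rewrite !exprS -!mulmxE -!mulmxA !mxE (sum_J (G := fun k => E (fJ i) k * (E ^+ m *m W) k 0)).
  by apply: eq_bigr => j _; rewrite IH [As i j]mxE.
by move=> k hk; rewrite colz ?mul0r.
Qed.

Lemma eig_restrict g : g != 0 -> \det (g%:M - E) = 0 -> root (char_poly As) g.
Proof.
move=> g0 /eqP/det0P [v v0 hv].
have hE : v *m E = g *: v by apply/eqP; rewrite eq_sym -subr_eq0 -mul_mx_scalar -mulmxBr hv.
have vk0 : forall k, k \notin J -> v 0 k = 0.
  move=> k hk; have := congr1 (fun A : 'rV_q => A 0 k) hE; rewrite !mxE big1.
    by move/esym/eqP; rewrite mulf_eq0 (negbTE g0) => /eqP.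
  by move=> l _; rewrite colz ?mulr0.
rewrite -eigenvalue_root_char; apply/eigenvalueP.
exists (\row_i v 0 (fJ i)).
  apply/rowP => i; rewrite !mxE.
  rewrite (_ : \sum_j _ = (v *m E) 0 (fJ i)); first by rewrite hE mxE.
  rewrite mxE (sum_J (G := fun k => v 0 k * E k (fJ i))).
    by apply: eq_bigr => j _; rewrite !mxE.
  by move=> k hk; rewrite vk0 ?mul0r.
apply: contra v0 => /eqP h; apply/eqP/rowP => k; rewrite mxE.
case: (boolP (k \in J)) => hk; last exact: vk0.
have := congr1 (fun A : 'rV_n => A 0 (cast_ord cardJ (enum_rank_in hk k))) h.
by rewrite !mxE /fJ cast_ordK enum_rankK_in.
Qed.

End Block.

Lemma rec_step (F : fieldType) r (A : 'M[F]_r.+1) (W : 'cV[F]_r.+1) (i0 : 'I_r.+1) g m :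
  root (char_poly A) g ->
  (A ^+ (m + r.+1) *m W) i0 0 - g ^+ (m + r.+1) =
  - \sum_(k < r.+1) (char_poly A)`_k * ((A ^+ (m + k) *m W) i0 0 - g ^+ (m + k)).
Proof.
move=> hr; set p := char_poly A.
have hs : size p = r.+2 := size_char_poly A.
have hl : p`_r.+1 = 1.
  by have := char_poly_monic A; rewrite monicE lead_coefE hs => /eqP.
have h1 : \sum_(k < size p) p`_k * (A ^+ (m + k) *m W) i0 0 = 0.
  have := congr1 (fun B => (B *m (A ^+ m *m W)) i0 0) (Cayley_Hamilton A).
  rewrite /= -/p horner_mx_sum mul0mx mulmx_suml summxE mxE => h; apply: etrans h.
  apply: eq_bigr => k _; rewrite -scalemxAl mxE mulmxA mulmxE -exprD addnC.
  by rewrite !mxE.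
have h2 : \sum_(k < size p) p`_k * g ^+ (m + k) = 0.
  have : p.[g] = 0 by apply/eqP.
  rewrite horner_coef => h; have := congr1 (fun x => g ^+ m * x) h.
  rewrite /= mulr0 mulr_sumr => h'; apply: etrans h'.
  by apply: eq_bigr => k _; rewrite exprD mulrCA.
have h3 : \sum_(k < size p) p`_k * ((A ^+ (m + k) *m W) i0 0 - g ^+ (m + k)) = 0.
  have := congr2 (fun x y => x - y) h1 h2; rewrite /= subr0 -sumrB => h'.
  by apply: etrans h'; apply: eq_bigr => k _; rewrite mulrBr.
move: h3; rewrite hs big_ord_recr /= hl mul1r => /eqP.
by rewrite addrC addr_eq0 => /eqP.
Qed.

Local Open Scope complex_scope.


Section BdPoly.
Variables (R : realType) (d : nat).
Local Notation C := R[i].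
Local Notation nc := (@Normc.normc R).
Local Notation vn := (@vnorm R d).

Lemma O_mul0 (f g : ('I_d -> R) -> C) p : OAt0 f 0 -> OAt0 g p ->
  OAt0 (fun th => f th * g th) p.
Proof. by move=> hf hg; have := O_mul hf hg; rewrite add0n. Qed.

Definition BdP (P : ('I_d -> R) -> {poly C}) := forall k, OAt0 (fun th => (P th)`_k) 0.

Lemma BdP_ext P Q : BdP P -> (forall th, Q th = P th) -> BdP Q.
Proof. by move=> h e k; eapply O_ext; [exact: (h k)|] => th; rewrite e. Qed.

Lemma BdP_cst (p : {poly C}) : BdP (fun _ => p).
Proof. by move=> k; exact: O_cst. Qed.

Lemma BdP_C f : OAt0 f 0 -> BdP (fun th => (f th)%:P).
Proof.
move=> h k; case: k => [|k].
  by eapply O_ext; [exact: h|] => th; rewrite coefC.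
by eapply O_ext; [exact: (O_zero _ _ 0)|] => th; rewrite coefC.
Qed.

Lemma BdP_add P Q : BdP P -> BdP Q -> BdP (fun th => P th + Q th).
Proof. by move=> hP hQ k; eapply O_ext; [exact: (O_add (hP k) (hQ k))|] => th; rewrite coefD. Qed.

Lemma BdP_sub P Q : BdP P -> BdP Q -> BdP (fun th => P th - Q th).
Proof. by move=> hP hQ k; eapply O_ext; [exact: (O_sub (hP k) (hQ k))|] => th; rewrite coefB. Qed.

Lemma BdP_mul P Q : BdP P -> BdP Q -> BdP (fun th => P th * Q th).
Proof.
move=> hP hQ k.
have hs : OAt0 (fun th => \sum_(j < k.+1) (P th)`_j * (Q th)`_(k - j)) 0.
  apply: O_sum => j _; apply: O_mul0; [exact: hP|exact: hQ].
by eapply O_ext; [exact: hs|] => th; rewrite coefM.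
Qed.

Lemma BdP_prod (I : Type) (s : seq I) (Pr : pred I) (F : I -> ('I_d -> R) -> {poly C}) :
  (forall i, Pr i -> BdP (F i)) -> BdP (fun th => \prod_(i <- s | Pr i) F i th).
Proof.
move=> h; elim: s => [|a s IH].
  by eapply BdP_ext; [exact: (BdP_cst 1)|] => th; rewrite big_nil.
case Pa: (Pr a).
  by eapply BdP_ext; [exact: (BdP_mul (h a Pa) IH)|] => th; rewrite big_cons Pa.
by eapply BdP_ext; [exact: IH|] => th; rewrite big_cons Pa.
Qed.

Lemma BdP_sum (I : Type) (s : seq I) (Pr : pred I) (F : I -> ('I_d -> R) -> {poly C}) :
  (forall i, Pr i -> BdP (F i)) -> BdP (fun th => \sum_(i <- s | Pr i) F i th).
Proof.
move=> h; elim: s => [|a s IH].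
  by eapply BdP_ext; [exact: (BdP_cst 0)|] => th; rewrite big_nil.
case Pa: (Pr a).
  by eapply BdP_ext; [exact: (BdP_add (h a Pa) IH)|] => th; rewrite big_cons Pa.
by eapply BdP_ext; [exact: IH|] => th; rewrite big_cons Pa.
Qed.

Lemma BdP_charpoly n (A : ('I_d -> R) -> 'M[C]_n) :
  (forall i j, OAt0 (fun th => A th i j) 0) -> BdP (fun th => char_poly (A th)).
Proof.
move=> hA.
have hE : forall i j, BdP (fun th => char_poly_mx (A th) i j).
  move=> i j; have hX := BdP_sub (BdP_cst ('X *+ (i == j))) (BdP_C (hA i j)).
  by eapply BdP_ext; first exact: hX; move=> th /=; rewrite !mxE.
rewrite /char_poly /determinant.
apply: BdP_sum => s _; apply: BdP_mul; first exact: BdP_cst.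
by apply: BdP_prod => i _; apply: hE.
Qed.

Lemma O_small f p : (0 < p)%N -> OAt0 f p -> forall e, 0 < e ->
  exists2 de, 0 < de & forall th, vn th < de -> nc (f th) <= e.
Proof.
move=> p0 /O_Kpos [K [de [K0 dp H]]] e e0.
have K1 : 0 < K + 1 by rewrite ltr_wpDl.
exists (Num.min de (Num.min 1 (e / (K + 1)))).
  by rewrite !lt_min dp ltr01 divr_gt0.
move=> th; rewrite !lt_min => /andP[h1 /andP[h2 h3]].
apply: le_trans (H _ h1) _.
have v0 := vn_ge0 th.
have : vn th ^+ p <= vn th.
  by rewrite -[X in _ <= X]expr1; apply: ler_wiXn2l => //; exact: ltW.
move=> hp.
have : (K + 1) * vn th <= e by rewrite mulrC -ler_pdivlMr // ltW.
move=> hk.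
have : K * vn th ^+ p <= K * vn th by apply: ler_wpM2l.
nra.
Qed.

Lemma Re_half (z : C) : nc (z - 1) <= 2^-1 -> 0 < complex.Re z.
Proof.
case: z => a b h; have h' := nc_Re ((a +i* b) - 1).
have e : complex.Re ((a +i* b) - 1) = a - 1 by [].
rewrite e /= in h'.
have := le_trans h' h.
have h2 : (0:R) < 2^-1 by rewrite invr_gt0.
rewrite ler_norml => /andP[hh _].
rewrite /=; lra.
Qed.

Lemma nc_le2 (z : C) : nc (z - 1) <= 2^-1 -> nc z <= 2.
Proof.
move=> h; have := ncD (z - 1) 1; rewrite subrK Normc.normc1 => h2.
have h3 : (2^-1 : R) <= 1 by lra.
apply: le_trans h2 _; lra.
Qed.

Lemma from_log (G g : ('I_d -> R) -> C) n p : (0 < p)%N ->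
  OAt0 (fun th => g th - 1) 1 -> OAt0 (fun th => G th - 1) 1 ->
  OAt0 (fun th => Logc (G th) - n%:R * Logc (g th)) p ->
  OAt0 (fun th => G th - g th ^+ n) p.
Proof.
move=> p0 hg hG hL.
have h2 : (0:R) < 2^-1 by rewrite invr_gt0.
have [d1 d1p H1] := O_small (isT : (0 < 1)%N) hg h2.
have [d2 d2p H2] := O_small (isT : (0 < 1)%N) hG h2.
have [d4 d4p H4] := O_small p0 hL ltr01.
have [K3 [d3 [K30 d3p H3]]] := O_Kpos hL.
exists (2 ^+ n * ((2 * expR 1 + 1) * K3)), (Num.min d1 (Num.min d2 (Num.min d3 d4))).
split; first by rewrite !lt_min d1p d2p d3p d4p.
move=> th; rewrite !lt_min => /and4P[h1 h2' h3 h4].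
set L := Logc (G th) - n%:R * Logc (g th).
have eG : G th = g th ^+ n * expc L.
  rewrite -{1}(expc_Logc (Re_half (H2 _ h2'))).
  have -> : Logc (G th) = n%:R * Logc (g th) + L by rewrite /L addrC subrK.
  by rewrite expcD expc_nat expc_Logc // (Re_half (H1 _ h1)).
have -> : G th - g th ^+ n = g th ^+ n * (expc L - 1) by rewrite eG mulrBr mulr1.
rewrite ncM ncX -mulrA; apply: ler_pM.
- by rewrite exprn_ge0 // nc_ge0.
- exact: nc_ge0.
- apply: lerXn2r; rewrite ?nnegrE ?nc_ge0 //.
  exact: nc_le2 (H1 _ h1).
apply: le_trans (expc_sub1 (H4 _ h4)) _.
rewrite -mulrA; apply: ler_wpM2l; first by have := expR_gt0 (1:R); lra.
exact: H3.
Qed.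

End BdPoly.


Unset Implicit Arguments. Set Strict Implicit.
Theorem proposition3 (R : realType) (d q : nat) (hd : (0 < d)%N) (hq : (0 < q)%N)
  (c : 'I_q -> 'I_d -> int) (M : 'M[R]_q) (s : 'I_q -> R) (eps : 'cV[R]_q)
  (w : 'I_q -> laurent R d) (g1 : ('I_d -> R) -> complex R) (H : nat) :
  M \in unitmx ->
  (forall i : 'I_q, i != idx1 hq -> 0 < s i <= 2) ->
  eps (idx1 hq) 0 = 1 ->
  (* g1 is the consistency root of the amplification polynomial *)
  (exists delta : R, 0 < delta /\ (forall th : 'I_d -> R, vnorm th < delta ->
     Phihat hq c M s eps (g1 th) th = 0)) ->
  OAt0 (fun th : 'I_d -> R => (g1 th - 1)%R) 1 ->
  (0 < H)%N ->
  (* (i) *)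
  OAt0 (fun th : 'I_d -> R => (laurent_symbol (w (idx1 hq)) th - 1)%R) H.+1 ->
  (* (ii) *)
  (forall n : nat, (1 <= n <= Qnum hq s)%N ->
     OAt0 (fun th : 'I_d -> R =>
       (Logc (gstart hq c M s eps w n th) - n%:R * Logc (g1 th))%R) H.+1) ->
  forall n : nat, (Qnum hq s < n)%N ->
    OAt0 (fun th : 'I_d -> R => (gstart hq c M s eps w n th - g1 th ^+ n)%R) H.+1.
Proof.
move=> hM hs he [de0 [de0p hroot]] hg1 hH hi hii n hn.
pose r := Qnum hq s.
pose J := [set i : 'I_q | (i == idx1 hq) || (s i != 1)].
have cardJ : #|J| = r.+1.
  have -> : J = idx1 hq |: [set i | (i != idx1 hq) && (s i != 1)].
    by apply/setP => i; rewrite !inE; case: (i == idx1 hq).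
  by rewrite cardsU1 !inE eqxx /= add1n.
have colz : forall th i k, k \notin J -> Ehat hq c M s eps th i k = 0.
  move=> th i k; rewrite inE negb_or => /andP[hk1 /negPn/eqP hk2].
  rewrite /Ehat mxE big1 // => l _; rewrite [X in _ * X]mxE Kmat_E (negbTE hk1) /=.
  case: (eqVneq l k) => [->|ne].
    by rewrite mulr0 subr0 hk2 /= ?mulr1n mulr1 subrr rmorph0 mulr0.
  by rewrite mulr0 /= ?mulr0n subrr mulr0 subrr rmorph0 mulr0.
pose A th := As (Ehat hq c M s eps th) cardJ.
pose W th := \col_j what w th (fJ cardJ j) 0.
have hidx : idx1 hq \in J by rewrite inE eqxx.
pose i0 := cast_ord cardJ (enum_rank_in hidx (idx1 hq)).
have fi0 : fJ cardJ i0 = idx1 hq by rewrite /fJ /i0 cast_ordK enum_rankK_in.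
have hga : forall j th, gstart hq c M s eps w j th = (A th ^+ j *m W th) i0 0.
  by move=> j th; rewrite /gstart -fi0 (pow_restrict cardJ (colz th)).
have h2 : (0:R) < 2^-1 by rewrite invr_gt0.
have [dg dgp Hg] := O_small (isT : (0 < 1)%N) hg1 h2.
have hroot' : forall th, vnorm th < Num.min de0 dg ->
    root (char_poly (A th)) (g1 th).
  move=> th; rewrite lt_min => /andP[t1 t2].
  have g0 : g1 th != 0.
    apply/eqP => e; have := Re_half (Hg _ t2); rewrite e /=; lra.
  apply: (eig_restrict cardJ (colz th) g0).
  have := hroot _ t1; rewrite /Phihat => /eqP; rewrite mulf_eq0 => /orP[|/eqP //].
  by rewrite (negbTE (expfz_neq0 _ g0)).
have hP : BdP (fun th => char_poly (A th)).
  apply: BdP_charpoly => i j; apply: Lip_Bd.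
  by eapply Lip_ext; first exact: (LipM_Ehat hq c M s eps (fJ cardJ i) (fJ cardJ j)); move=> th; rewrite mxE.
have w10 : laurent_symbol (w (idx1 hq)) (fun _ => 0) = 1.
  move: hi => [K [de [dep Hi]]]; have := Hi (fun _ => 0); rewrite vn0 => /(_ dep).
  rewrite expr0n /= mulr0 => h; apply/eqP; rewrite -subr_eq0; apply/eqP/Normc.eq0_normc.
  by apply/eqP; rewrite eq_le h nc_ge0.
have key : forall j, OAt0 (fun th => gstart hq c M s eps w j th - g1 th ^+ j) H.+1.
  elim/ltn_ind => j IH.
  case: (leqP j r) => hj.
    case: j hj IH => [|j] hj IH.
      by eapply O_ext; first exact: hi; move=> th; rewrite /gstart expr0 mul1mx mxE expr0.
    apply: (from_log (G := gstart hq c M s eps w j.+1) (g := g1) (n := j.+1) (p := H.+1) (isT : (0 < H.+1)%N) hg1).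
      eapply O_ext; first exact: (Lip_gstart hq c M s eps w j.+1).
      by move=> th; rewrite gstart0 // w10.
    by apply: hii; rewrite hj.
  have [m hm] : exists m, j = (m + r.+1)%N by exists (j - r.+1)%N; rewrite subnK.
  rewrite hm.
  have hS : OAt0 (fun th => \sum_(k < r.+1) (char_poly (A th))`_k *
      (gstart hq c M s eps w (m + k) th - g1 th ^+ (m + k))) H.+1.
    apply: O_sum => k _; apply: O_mul0; first exact: hP.
    by apply: IH; rewrite hm ltn_add2l.
  eapply (O_near (delta0 := Num.min de0 dg)); first exact: (O_opp hS).
    by rewrite lt_min de0p dgp.
  move=> th hth; rewrite !hga (rec_step _ _ _ (hroot' _ hth)).
  by congr (- _); apply: eq_bigr => k _; rewrite hga.
exact: key.
Qed.
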